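(* Let $E$ be a second countable Stone space with at least five points. Then the natural homomorphism $\mathrm{Homeo}(E)\to\mathrm{Aut}(\mathscr{C}(E))$, $f\mapsto \big(U\sqcup V\mapsto f(U)\sqcup f(V)\big)$, is an isomorphism of topological groups, where $\mathrm{Homeo}(E)$ carries the compact–open topology and $\mathrm{Aut}(\mathscr{C}(E))$ carries the permutation topology. (Equivalently, via Stone duality, $\mathrm{Aut}(B)\cong\mathrm{Aut}(\mathscr{C}(E))$ topologically, where $B$ is the countable Boolean algebra of clopen subsets of $E$ and $\mathrm{Aut}(B)$ carries the permutation topology.)
   Context: A Stone space is a compact, Hausdorff, totally disconnected topological space. A cut of $E$ is an unordered partition of $E$ into two disjoint clopen sets $U,V$, written $U\sqcup V$. A cut is non-peripheral if each of $U$ and $V$ contains at least two points. Two cuts $U\sqcup V$ and $U'\sqcup V'$ cross if all four sets $U\cap U'$, $U\cap V'$, $V\cap U'$, $V\cap V'$ are nonempty; otherwise they are compatible. The complex of cuts $\mathscr{C}(E)$ is the simplicial graph whose vertices are the non-peripheral cuts of $E$, with an edge between two distinct cuts whenever they are compatible. The permutation topology on the automorphism group of a graph has as a neighborhood basis of the identity the pointwise stabilizers of finite sets of vertices. *)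

(* Defs.v *)
From HB Require Import structures.
From mathcomp Require Import all_boot all_order.
From mathcomp Require Import all_classical all_reals all_analysis.
Set Implicit Arguments. Unset Strict Implicit. Unset Printing Implicit Defensive.
Local Open Scope classical_set_scope.

Section Cuts.
Variable T : topologicalType.

Definition stone_space : Prop :=
  [/\ compact [set: T], hausdorff_space T & totally_disconnected [set: T]].

Definition homeo (f : T -> T) : Prop :=
  exists g : T -> T, [/\ cancel f g, cancel g f, continuous f & continuous g].

(** A cut: an unordered partition {U, V} of T into two disjoint clopen sets;
    it is represented by the set of sets [set U; V]. *)
Definition is_cut_of (C : set (set T)) (U V : set T) : Prop :=
  [/\ C = [set U] `|` [set V], clopen U, clopen V,
      U `&` V = set0 & U `|` V = [set: T]].

Definition has_two_points (A : set T) : Prop :=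
  exists x y, [/\ x <> y, A x & A y].

Definition is_ncut (C : set (set T)) : Prop :=
  exists U V, is_cut_of C U V /\ has_two_points U /\ has_two_points V.

(** Vertices of the complex of cuts. *)
Definition ncut := {C : set (set T) | is_ncut C}.

Definition cross (C D : set (set T)) : Prop :=
  forall A B, C A -> D B -> A `&` B !=set0.

Definition compatible (C D : set (set T)) : Prop := ~ cross C D.

(** Edges of the complex of cuts C(E). *)
Definition adj (a b : ncut) : Prop :=
  a <> b /\ compatible (proj1_sig a) (proj1_sig b).

Definition isAut (phi : ncut -> ncut) : Prop :=
  bijective phi /\ forall a b, adj (phi a) (phi b) <-> adj a b.

Definition cut_image (f : T -> T) (C : set (set T)) : set (set T) :=
  [set f @` A | A in C].

(** The natural map Homeo(E) -> Aut(C(E)).  The fallback branch (identity)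
    is only used when f(U) ⊔ f(V) is not a non-peripheral cut, which never
    happens for homeomorphisms f. *)
Definition Phi (f : T -> T) (a : ncut) : ncut :=
  match pselect (is_ncut (cut_image f (proj1_sig a))) with
  | left H => exist _ (cut_image f (proj1_sig a)) H
  | right _ => a
  end.

Definition co_open (S : set (T -> T)) : Prop :=
  forall f, homeo f -> S f ->
  exists P : set (set T * set T),
    [/\ finite_set P,
        (forall p, P p -> compact p.1 /\ open p.2 /\ f @` p.1 `<=` p.2) &
        (forall h, homeo h -> (forall p, P p -> h @` p.1 `<=` p.2) -> S h)].

(** Permutation topology on Aut(C(E)): S (restricted to automorphisms) is
    open iff for each g in S there is a finite set F of vertices such that
    the coset g ∘ Stab(F) = {h | h = g on F} is contained in S. *)
Definition perm_open (S : set (ncut -> ncut)) : Prop :=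
  forall g, isAut g -> S g ->
  exists F : set ncut,
    finite_set F /\
    (forall h, isAut h -> (forall v, F v -> h v = g v) -> S h).

End Cuts.

(* Main.v *)
Require Import Defs.
From HB Require Import structures.
From mathcomp Require Import all_boot all_order.
From mathcomp Require Import all_classical all_reals all_analysis.
From Stdlib Require List.
Set Implicit Arguments. Unset Strict Implicit. Unset Printing Implicit Defensive.
Local Open Scope classical_set_scope.


Section Topo.
Variable T : topologicalType.

Lemma cpt_directed (K : set T) (D : set (set T)) :
  compact K -> (forall C, D C -> closed C) ->
  (forall A B, D A -> D B -> exists2 C, D C & C `<=` A `&` B) ->
  (forall C, D C -> C `&` K !=set0) -> D !=set0 ->
  exists z, K z /\ forall C, D C -> C z.
Proof.
move=> cK clD dD mD [C0 DC0].
pose F := filter_from D (fun C => C `&` K).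
have FF : ProperFilter F.
  apply: filter_from_proper; last by move=> C /mD.
  apply: filter_from_filter; first by exists C0.
  move=> A B DA DB; have [C DC CAB] := dD _ _ DA DB.
  exists C => // z [/CAB [? ?] ?]; split; split => //.
have FK : F K by exists C0 => // z [].
have [z [Kz clz]] := cK F FF FK.
exists z; split => // C DC.
have : closure (C `&` K) z.
  by move=> B Bz; apply: clz => //; exists C.
move=> /(closureS (@subIsetl _ C K)).
by rewrite -(closure_id C).1 //; apply: clD.
Qed.

Lemma zero_dim : hausdorff_space T -> compact [set: T] ->
  totally_disconnected [set: T] ->
  forall x y : T, x <> y -> exists C, [/\ clopen C, C x & ~ C y].
Proof.
move=> hT cT tdT x y xy.
apply: contrapT => nC.
have allC : forall C, clopen C -> C x -> C y.
  by move=> C clC Cx; apply: contrapT => nCy; apply: nC; exists C.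
pose Q := \bigcap_(C in [set C | clopen C /\ C x]) C.
have clQ : closed Q by apply: closed_bigI => C [[_ ?] _].
have key : forall B P, closed B -> closed P -> B `&` P = set0 ->
    Q = B `|` P -> B x -> P = set0.
  move=> B P clB clP BP0 QBP Bx.
  have nT := compact_normal hT cT.
  have snb : set_nbhs B (~` P).
    apply/set_nbhsP; exists (~` P); split => //; first exact: closed_openC.
    by move=> z Bz Pz; have : (B `&` P) z by []; rewrite BP0.
  have [V /set_nbhsP [U [oU BU UV]] clVP] := nT B clB _ snb.
  pose W := ~` closure V.
  have oW : open W by apply: closed_openC; exact: closed_closure.
  have UW0 : forall z, U z -> W z -> False.
    by move=> z Uz; apply; apply: subset_closure; apply: UV.
  have PW : P `<=` W by move=> z Pz /clVP.
  have [C [[oC cC] Cx CUW]] : exists C, [/\ clopen C, C x & C `<=` U `|` W].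
    apply: contrapT => nex.
    pose D := [set A | exists C, [/\ clopen C, C x & A = C `&` ~` (U `|` W)]].
    have [z [_ zD]] : exists z, [set: T] z /\ forall A, D A -> A z.
      apply: (cpt_directed cT).
      - move=> A [C [[_ cC] _ ->]]; apply: closedI => //.
        by apply: open_closedC; apply: openU.
      - move=> A B' [C1 [cl1 x1 ->]] [C2 [cl2 x2 ->]].
        exists (C1 `&` C2 `&` ~` (U `|` W)).
          by exists (C1 `&` C2); split => //; exact: clopenI.
        by move=> z [[? ?] ?]; split; split.
      - move=> A [C [clC Cx' ->]].
        apply: contrapT => /set0P/negP; rewrite negbK => /eqP e.
        apply: nex; exists C; split => // z Cz; apply: contrapT => nz.
        have : (C `&` ~` (U `|` W) `&` [set: T]) z by [].
        by rewrite e.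
      - by exists (setT `&` ~` (U `|` W)); exists setT; split => //; exact: clopenT.
    have Qz : Q z.
      move=> C [clC Cx']; have [] := zD (C `&` ~` (U `|` W)).
        by exists C.
      by [].
    have [] := zD (setT `&` ~` (U `|` W)); first by exists setT; split=> //; exact: clopenT.
    move=> _; apply; move: Qz; rewrite QBP => -[Bz|Pz]; [left; exact: BU|right; exact: PW].
  have clCU : clopen (C `&` U).
    split; first exact: openI.
    have -> : C `&` U = C `&` ~` W.
      apply/seteqP; split => z [Cz h]; split => //.
        by move=> Wz; exact: UW0 Wz.
      by case: (CUW _ Cz).
    by apply: closedI => //; apply: open_closedC.
  have QCU : Q `<=` C `&` U by move=> z Qz; apply: Qz; split => //; split => //; exact: BU.
  apply/seteqP; split => // z Pz.
  have [_ Uz] : (C `&` U) z by apply: QCU; rewrite QBP; right.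
  exact: UW0 Uz (PW _ Pz).
have conQ : connected Q.
  move=> B [b Bb] [Op oO BQO] [Cl clCl BQCl].
  have clB : closed B by rewrite BQCl; apply: closedI.
  pose P := Q `&` ~` Op.
  have clP : closed P by apply: closedI => //; apply: open_closedC.
  have BP0 : B `&` P = set0.
    by apply/seteqP; split => // z [+ [_ nO]]; rewrite BQO => -[].
  have QBP : Q = B `|` P.
    apply/seteqP; split; last by move=> z [|[]//]; rewrite BQO => -[].
    by move=> z Qz; case: (pselect (Op z)) => Oz; [left; rewrite BQO|right].
  have Qx : Q x by move=> C [].
  case: (pselect (B x)) => Bx.
    have P0 := key _ _ clB clP BP0 QBP Bx.
    by rewrite QBP P0 setU0.
  have Px : P x by move: Qx; rewrite QBP => -[].
  have B0 : B = set0.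
    apply: (key P B clP clB); [by rewrite setIC|by rewrite setUC|by []].
  by move: Bb; rewrite B0.
have Qy : Q y by move=> C [clC Cx]; apply: allC.
have Qx : Q x by move=> C [].
have : connected_component [set: T] x y by exists Q => //; split.
by rewrite tdT //= => yx; apply: xy; rewrite yx.
Qed.

End Topo.


Section Basic.
Variable T : topologicalType.
Variable cT : compact [set: T].
Variable zd : forall x y : T, x <> y -> exists C, [/\ clopen C, C x & ~ C y].
Variable pts : 'I_5 -> T.
Variable ipts : injective pts.

Let p0 := pts (@Ordinal 5 0 isT).
Let p1 := pts (@Ordinal 5 1 isT).
Let p2 := pts (@Ordinal 5 2 isT).
Let p3 := pts (@Ordinal 5 3 isT).
Let p4 := pts (@Ordinal 5 4 isT).

Lemma pdist : [/\ p0 <> p1, p0 <> p2, p0 <> p3, p0 <> p4 &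
  [/\ p1 <> p2, p1 <> p3, p1 <> p4, p2 <> p3 & [/\ p2 <> p4 & p3 <> p4]]].
Proof. by split; [..|split; [..|split]] => /ipts. Qed.

Definition three (A : set T) := exists a b c, [/\ a <> b, a <> c, b <> c & [/\ A a, A b & A c]].

Ltac solve_tri :=
  first
  [ left; exists p0, p1, p2; by repeat split
  | left; exists p0, p1, p3; by repeat split
  | left; exists p0, p1, p4; by repeat split
  | left; exists p0, p2, p3; by repeat split
  | left; exists p0, p2, p4; by repeat split
  | left; exists p0, p3, p4; by repeat split
  | left; exists p1, p2, p3; by repeat split
  | left; exists p1, p2, p4; by repeat split
  | left; exists p1, p3, p4; by repeat split
  | left; exists p2, p3, p4; by repeat split
  | right; exists p0, p1, p2; by repeat split
  | right; exists p0, p1, p3; by repeat split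
  | right; exists p0, p1, p4; by repeat split
  | right; exists p0, p2, p3; by repeat split
  | right; exists p0, p2, p4; by repeat split
  | right; exists p0, p3, p4; by repeat split
  | right; exists p1, p2, p3; by repeat split
  | right; exists p1, p2, p4; by repeat split
  | right; exists p1, p3, p4; by repeat split
  | right; exists p2, p3, p4; by repeat split ].

Lemma pigeon (U : set T) : three U \/ three (~` U).
Proof.
have [d01 d02 d03 d04 [d12 d13 d14 d23 [d24 d34]]] := pdist.
case: (pselect (U p0)) => h0; case: (pselect (U p1)) => h1;
case: (pselect (U p2)) => h2; case: (pselect (U p3)) => h3;
case: (pselect (U p4)) => h4; solve_tri.
Qed.

Ltac pick2 :=
  first
  [ exists p0, p1; by repeat split
  | exists p0, p2; by repeat split
  | exists p0, p3; by repeat split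
  | exists p0, p4; by repeat split
  | exists p1, p2; by repeat split
  | exists p1, p3; by repeat split
  | exists p1, p4; by repeat split
  | exists p2, p3; by repeat split
  | exists p2, p4; by repeat split
  | exists p3, p4; by repeat split ].

Lemma avoid3 (a b c : T) : exists p q,
  [/\ p <> q, p <> a, p <> b, p <> c & [/\ q <> a, q <> b & q <> c]].
Proof.
have [d01 d02 d03 d04 [d12 d13 d14 d23 [d24 d34]]] := pdist.
have H : forall p, p = a \/ p = b \/ p = c \/ (p <> a /\ p <> b /\ p <> c).
  move=> p; case: (pselect (p = a)); first by left.
  case: (pselect (p = b)); first by right; left.
  case: (pselect (p = c)); first by right; right; left.
  by right; right; right.
case: (H p0) => [?|[?|[?|[? [? ?]]]]]; case: (H p1) => [?|[?|[?|[? [? ?]]]]];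
case: (H p2) => [?|[?|[?|[? [? ?]]]]]; case: (H p3) => [?|[?|[?|[? [? ?]]]]];
case: (H p4) => [?|[?|[?|[? [? ?]]]]]; subst;
  try (exfalso; congruence); pick2.
Qed.

End Basic.


Section Sep.
Variable T : topologicalType.
Variable cT : compact [set: T].
Variable zd : forall x y : T, x <> y -> exists C, [/\ clopen C, C x & ~ C y].
Variable pts : 'I_5 -> T.
Variable ipts : injective pts.

Let avoid3 := avoid3 ipts.

Lemma sepL (x : T) (ys : seq T) : (forall y, Stdlib.Lists.List.In y ys -> x <> y) ->
  exists C, [/\ clopen C, C x & forall y, Stdlib.Lists.List.In y ys -> ~ C y].
Proof.
elim: ys => [|y ys IH] H.
  by exists setT; split => //; exact: clopenT.
have [C1 [cl1 x1 y1]] := zd (H y (or_introl erefl)).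
have [C2 [cl2 x2 y2]] := IH (fun z hz => H z (or_intror hz)).
exists (C1 `&` C2); split => //; first exact: clopenI.
by move=> z [<-|hz] [h1 h2]; [exact: y1 h1|exact: y2 z hz h2].
Qed.

Lemma sepLL (xs ys : seq T) :
  (forall x y, Stdlib.Lists.List.In x xs -> Stdlib.Lists.List.In y ys -> x <> y) ->
  exists C, [/\ clopen C, forall x, Stdlib.Lists.List.In x xs -> C x &
                 forall y, Stdlib.Lists.List.In y ys -> ~ C y].
Proof.
elim: xs => [|x xs IH] H.
  exists set0; split; [by split; [exact: open0|exact: closed0]|by move=> ? []|by move=> ? ? []].
have [C1 [cl1 x1 y1]] := sepL (fun y hy => H x y (or_introl erefl) hy).
have [C2 [cl2 x2 y2]] := IH (fun a b ha hb => H a b (or_intror ha) hb).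
exists (C1 `|` C2); split.
- by case: cl1 cl2 => ? ? [? ?]; split; [exact: openU|exact: closedU].
- by move=> z [<-|hz]; [left|right; exact: x2].
- by move=> z hz [h|h]; [exact: y1 h|exact: y2 z hz h].
Qed.

Lemma clopen_nbhd_sub (k : T) (W : set T) : open W -> W k ->
  exists C, [/\ clopen C, C k & C `<=` W].
Proof.
move=> oW Wk; apply: contrapT => nex.
pose D := [set A | exists C, [/\ clopen C, C k & A = C `&` ~` W]].
have [z [_ zD]] : exists z, [set: T] z /\ forall A, D A -> A z.
  apply: (cpt_directed cT).
  - by move=> A [C [[_ cC] _ ->]]; apply: closedI => //; exact: open_closedC.
  - move=> A B [C1 [cl1 x1 ->]] [C2 [cl2 x2 ->]].
    exists (C1 `&` C2 `&` ~` W); first by exists (C1 `&` C2); split => //; exact: clopenI.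
    by move=> z [[? ?] ?]; split; split.
  - move=> A [C [clC Ck ->]]; apply: contrapT => /set0P/negP; rewrite negbK => /eqP e.
    apply: nex; exists C; split => // z Cz; apply: contrapT => nz.
    have : (C `&` ~` W `&` [set: T]) z by [].
    by rewrite e.
  - by exists (setT `&` ~` W); exists setT; split => //; exact: clopenT.
have [_ nWz] := zD (setT `&` ~` W) (ex_intro _ setT (And3 clopenT I erefl)).
case: (pselect (z = k)) => [zk|zk]; first by apply: nWz; rewrite zk.
have [C [clC Ck nCz]] := zd (nesym zk).
by have [] := zD (C `&` ~` W) (ex_intro _ C (And3 clC Ck erefl)).
Qed.

Lemma clopen_between (K W : set T) : compact K -> open W -> K `<=` W ->
  exists C, [/\ clopen C, K `<=` C & C `<=` W].
Proof.
move=> cK oW KW; apply: contrapT => nex.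
pose D := [set A | exists C, [/\ clopen C, C `<=` W & A = ~` C]].
have [z [Kz zD]] : exists z, K z /\ forall A, D A -> A z.
  apply: (cpt_directed cK).
  - by move=> A [C [[oC _] _ ->]]; exact: open_closedC.
  - move=> A B [C1 [cl1 s1 ->]] [C2 [cl2 s2 ->]].
    exists (~` (C1 `|` C2)).
      exists (C1 `|` C2); split => //.
        by case: cl1 cl2 => ? ? [? ?]; split; [exact: openU|exact: closedU].
      by move=> z [/s1|/s2].
    by move=> z nz; split => h; apply: nz; [left|right].
  - move=> A [C [clC CW ->]]; apply: contrapT => /set0P/negP; rewrite negbK => /eqP e.
    apply: nex; exists C; split => // z Kz; apply: contrapT => nz.
    have : (~` C `&` K) z by [].
    by rewrite e.
  - by exists (~` set0); exists set0; split => //; split; [exact: open0|exact: closed0].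
have [C [clC Cz CW]] := clopen_nbhd_sub oW (KW _ Kz).
by have := zD (~` C) (ex_intro _ C (And3 clC CW erefl)).
Qed.

Definition nd (A : set T) :=
  [/\ clopen A, has_two_points A & has_two_points (~` A)].

Lemma nd_sep (x y : T) : x <> y -> exists B, [/\ nd B, B x & ~ B y].
Proof.
move=> xy; have [p [q [pq px py _ [qx qy _]]]] := avoid3 x y y.
have hs : forall a b, Stdlib.Lists.List.In a [:: x; p] -> Stdlib.Lists.List.In b [:: y; q] -> a <> b.
  move=> a b /= [<-|[<-|[]]] [<-|[<-|[]]] //; exact/nesym.
have [C [clC hx hy]] := sepLL hs.
exists C; split.
- split => //; first by exists x, p; split => //; [exact/nesym| apply: hx; simpl; auto..].
  exists y, q; split => //; [exact/nesym|apply: hy; simpl; auto..].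
- by apply: hx; left.
- by apply: hy; left.
Qed.

Lemma nd_nbhd (z : T) (W : set T) : open W -> W z ->
  exists N1 N2, [/\ nd N1, nd N2, N1 z, N2 z & N1 `&` N2 `<=` W].
Proof.
move=> oW Wz.
have [C [clC Cz CW]] := clopen_nbhd_sub oW Wz.
have [p [q [pq pz _ _ [qz _ _]]]] := avoid3 z z z.
have [r [s [rs rz rp rq [sz sp sq]]]] := avoid3 z p q.
have hG : forall y, Stdlib.Lists.List.In y [:: p; q; r; s] -> z <> y.
  by move=> y /= [<-|[<-|[<-|[<-|[]]]]]; apply/nesym.
have [G [clG Gz Gn]] := sepL hG.
have hH1 : forall y, Stdlib.Lists.List.In y [:: z; q; r; s] -> p <> y.
  by move=> y /= [<-|[<-|[<-|[<-|[]]]]] //; apply/nesym.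
have [H1 [clH1 H1p H1n]] := sepL hH1.
have hH2 : forall y, Stdlib.Lists.List.In y [:: z; p; r; s] -> q <> y.
  by move=> y /= [<-|[<-|[<-|[<-|[]]]]] //; apply/nesym.
have [H2 [clH2 H2q H2n]] := sepL hH2.
have clU : forall A B : set T, clopen A -> clopen B -> clopen (A `|` B).
  by move=> A B [? ?] [? ?]; split; [exact: openU|exact: closedU].
have clC' : clopen (C `&` G) by exact: clopenI.
have clH2' : clopen (H2 `&` ~` H1).
  by apply: clopenI => //; case: clH1 => ? ?; split; [exact: closed_openC|exact: open_closedC].
exists (C `&` G `|` H1), (C `&` G `|` (H2 `&` ~` H1)); split.
- split; first exact: clU.
  + exists z, p; split; [exact/nesym|by left|by right].
  + exists q, r; split; first exact/nesym.
    * move=> [[_ /Gn]|/H1n]; simpl; tauto.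
    * move=> [[_ /Gn]|/H1n]; simpl; tauto.
- split; first exact: clU.
  + exists z, q; split; [exact/nesym|by left|].
    right; split; first by apply: H2q.
    by apply: H1n; simpl; tauto.
  + exists p, r; split; first exact/nesym.
    * move=> [[_ /Gn]|[/H2n]]; simpl; tauto.
    * move=> [[_ /Gn]|[/H2n]]; simpl; tauto.
- by left.
- by left.
- by move=> y [[[/CW ? _]|H1y] [[/CW ? _]|[_ nH1y]]].
Qed.

End Sep.


Section Cutc.
Variable T : topologicalType.
Variable zd : forall x y : T, x <> y -> exists C, [/\ clopen C, C x & ~ C y].

Definition cutset (A : set T) : set (set T) := [set A] `|` [set ~` A].

Lemma cutsetC A : cutset (~` A) = cutset A.
Proof. by rewrite /cutset setCK setUC. Qed.

Lemma ncut_eq (a b : ncut T) : proj1_sig a = proj1_sig b -> a = b.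
Proof.
case: a b => [a ha] [b hb] /= e; subst b.
by rewrite (Prop_irrelevance ha hb).
Qed.

Lemma clopenC (A : set T) : clopen A -> clopen (~` A).
Proof. by case=> ? ?; split; [exact: closed_openC|exact: open_closedC]. Qed.

Lemma ndCo (A : set T) : nd A -> nd (~` A).
Proof. by case=> ? ? ?; split; rewrite ?setCK //; exact: clopenC. Qed.

Lemma nd_ncut (U : set T) : nd U -> is_ncut (cutset U).
Proof.
case=> clU h1 h2; exists U, (~` U); split => //; split => //.
- exact: clopenC.
- by apply/seteqP; split => z // [].
- by apply/seteqP; split => z // _; case: (pselect (U z)); [left|right].
Qed.

Definition nc (U : set T) (h : nd U) : ncut T := exist _ (cutset U) (nd_ncut h).

Lemma ncutP (a : ncut T) : exists U, nd U /\ proj1_sig a = cutset U.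
Proof.
case: a => C hC /=; case: hC => U [V [[eC clU clV UV0 UV] [hU hV]]]; rewrite eC.
have VC : V = ~` U.
  apply/seteqP; split => z.
    by move=> Vz Uz; have : (U `&` V) z by []; rewrite UV0.
  move=> nUz; have : (U `|` V) z by rewrite UV.
  by case.
subst V; exists U; split => //; split.
Qed.

Lemma nd_ne (U : set T) : nd U -> U !=set0.
Proof. by case=> _ [x [y [_ ? _]]] _; exists x. Qed.

Lemma cutset_eq (U W : set T) : nd U -> cutset U = cutset W -> W = U \/ W = ~` U.
Proof.
move=> ndU e; have : cutset U W by rewrite e; left.
by case=> ->; [left|right].
Qed.

Lemma piece_nd (b : ncut T) (P : set T) : proj1_sig b = cutset P -> nd P.
Proof.
move=> e; have [V [ndV eV]] := ncutP b.
have [->|->] := cutset_eq ndV (etrans (esym eV) e) => //; exact: ndCo.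
Qed.

Definition ssub (P U : set T) := P `<=` U /\ exists z, U z /\ ~ P z.

Definition in_ (U : set T) (b : ncut T) :=
  exists P, proj1_sig b = cutset P /\ ssub P U.

Lemma ncC (U : set T) (h : nd U) (h' : nd (~` U)) : nc h' = nc h.
Proof. by apply: ncut_eq; rewrite /= cutsetC. Qed.

Lemma crossE (A B : set T) : cross (cutset A) (cutset B) <->
  [/\ A `&` B !=set0, A `&` ~` B !=set0, ~` A `&` B !=set0 & ~` A `&` ~` B !=set0].
Proof.
split.
  by move=> h; split; apply: h; rewrite /cutset /=; auto.
case=> h1 h2 h3 h4 X Y [->|->] [->|->] //.
Qed.

Lemma not_cross (A B : set T) : ~ cross (cutset A) (cutset B) ->
  exists X Y, [/\ X = A \/ X = ~` A, Y = B \/ Y = ~` B & forall z, X z -> Y z -> False].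
Proof.
move=> nc'; apply: contrapT => nex; apply: nc'; apply/crossE.
have H : forall X Y, X = A \/ X = ~` A -> Y = B \/ Y = ~` B -> X `&` Y !=set0.
  move=> X Y hX hY; apply: contrapT => ne; apply: nex; exists X, Y; split => // z Xz Yz.
  by apply: ne; exists z.
by split; apply: H; auto.
Qed.

Lemma in_nd (U : set T) (b : ncut T) (P : set T) : proj1_sig b = cutset P -> nd P.
Proof. exact: piece_nd. Qed.

Lemma link_in (U : set T) (h : nd U) (b : ncut T) : adj (nc h) b -> in_ U b \/ in_ (~` U) b.
Proof.
case=> neq ncr.
have [V [ndV eV]] := ncutP b.
move: ncr; rewrite /= eV => /not_cross [X [Y [hX hY XY]]].
have key : ssub Y (~` X).
  split; first by move=> z Yz Xz; exact: XY Xz Yz.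
  apply: contrapT => nz; apply: neq; apply: ncut_eq => /=; rewrite eV.
  have YX : Y = ~` X.
    apply/seteqP; split; first by move=> z Yz Xz; exact: XY Xz Yz.
    by move=> z nXz; apply: contrapT => nYz; apply: nz; exists z.
  have cY : cutset Y = cutset V by case: hY => ->; rewrite ?cutsetC.
  have cX : cutset X = cutset U by case: hX => ->; rewrite ?cutsetC.
  by rewrite -cY -cX YX cutsetC.
have hb : proj1_sig b = cutset Y by rewrite eV; case: hY => ->; rewrite ?cutsetC.
case: hX => -> in key.
  by right; exists Y.
by left; exists Y; rewrite -[U]setCK.
Qed.

Lemma ssub_ne (P U : set T) : nd P -> ssub P U -> P <> ~` U.
Proof.
move=> ndP [PU _] e; have [x Px] := nd_ne ndP.
by have := PU _ Px; move: Px; rewrite e.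
Qed.

Lemma in_adj (U : set T) (h : nd U) (b : ncut T) : in_ U b -> adj (nc h) b.
Proof.
move=> [P [eb [PU [z [Uz nPz]]]]]; have ndP := piece_nd eb.
split.
  move=> e; have : cutset U = cutset P by rewrite -eb -e.
  move=> /(cutset_eq h) [PeU|PeU].
    by apply: nPz; rewrite PeU.
  by have [x Px] := nd_ne ndP; have := PU _ Px; move: Px; rewrite PeU.
rewrite /= eb => /crossE [_ _ [x [nUx Px]] _].
exact: nUx (PU _ Px).
Qed.

Lemma in_adjC (U : set T) (h : nd U) (b : ncut T) : in_ (~` U) b -> adj (nc h) b.
Proof. by move=> hb; rewrite -(ncC h (ndCo h)); exact: in_adj. Qed.

Lemma in_excl (U : set T) (b : ncut T) : in_ U b -> in_ (~` U) b -> False.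
Proof.
move=> [P [eP [PU [z [Uz nPz]]]]] [Q [eQ [QU _]]].
have ndP := piece_nd eP.
have [e|e] := cutset_eq ndP (etrans (esym eP) eQ).
  have [x Px] := nd_ne ndP.
  by have := QU x; rewrite e => /(_ Px); apply; exact: PU.
by apply: nPz; apply: contrapT => nPz; have := QU z; rewrite e => /(_ nPz).
Qed.

Lemma cross_nadj (b d : ncut T) : cross (proj1_sig b) (proj1_sig d) -> ~ adj b d.
Proof. by move=> cr [_]; apply. Qed.

Lemma opp_adj (U : set T) (b c : ncut T) : in_ U b -> in_ (~` U) c -> adj b c.
Proof.
move=> hb hc; split.
  by move=> e; subst c; exact: in_excl hb hc.
case: hb hc => [P [eP [PU _]]] [Q [eQ [QU _]]].
rewrite eP eQ => /crossE [[x [Px Qx]] _ _ _].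
exact: QU Qx (PU _ Px).
Qed.

Lemma nd_split (B : set T) : nd B ->
  exists S, [/\ clopen S, B `&` S !=set0 & B `&` ~` S !=set0].
Proof.
case=> _ [b [b' [bb' Bb Bb']]] _.
have [S [clS Sb nSb']] := zd bb'.
by exists S; split => //; [exists b|exists b'].
Qed.

Lemma clopenD (A B : set T) : clopen A -> clopen B -> clopen (A `&` ~` B).
Proof. by move=> hA hB; apply: clopenI => //; exact: clopenC. Qed.

Lemma clopenU (A B : set T) : clopen A -> clopen B -> clopen (A `|` B).
Proof. by move=> [? ?] [? ?]; split; [exact: openU|exact: closedU]. Qed.

Lemma mk_in (U D : set T) (h : nd D) : ssub D U -> in_ U (nc h).
Proof. by move=> s; exists D. Qed.

Lemma cross_nested (U B C : set T) : nd U -> nd B -> nd C -> ssub B U -> ssub C U ->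
  B `<=` C -> exists D (h : nd D),
    [/\ ssub D U, cross (cutset D) (cutset B) & cross (cutset D) (cutset C)].
Proof.
move=> ndU ndB ndC [BU _] [CU [u [Uu nCu]]] BC.
have [S [clS [b1 [Bb1 Sb1]] [b2 [Bb2 nSb2]]]] := nd_split ndB.
have [w nUw] := nd_ne (ndCo ndU).
case: (ndB) => clB _ _; case: (ndC) => clC _ _; case: (ndU) => clU _ [w1 [w2 [w12 nw1 nw2]]].
pose D := (B `&` S) `|` (U `&` ~` C).
have clD : clopen D by apply: clopenU; [exact: clopenI|exact: clopenD].
have ndD : nd D.
  split => //.
    exists b1, u; split; [|by left|by right].
    by move=> e; apply: nCu; rewrite -e; exact: BC.
  by exists w1, w2; split => // -[[/BU ? _]|[? _]].
exists D, ndD; split.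
- split; first by move=> z [[/BU]|[]].
  by exists b2; split; [exact: BU|move=> [[_ ?]|[_ /(_ (BC _ Bb2))]]].
- apply/crossE; split.
  + by exists b1; split => //; left.
  + by exists u; split; [right|move=> /BC].
  + by exists b2; split => //; move=> [[_ ?]|[_ /(_ (BC _ Bb2))]].
  + by exists w; split => //; [move=> [[/BU]|[]]|move=> /BU].
- apply/crossE; split.
  + by exists b1; split; [left|exact: BC].
  + by exists u; split; [right|].
  + by exists b2; split; [move=> [[_ ?]|[_ /(_ (BC _ Bb2))]]|exact: BC].
  + by exists w; split => //; [move=> [[/BU]|[]]|move=> /CU].
Qed.

Lemma cross_disj (U B C : set T) : nd U -> nd B -> nd C -> ssub B U -> ssub C U ->
  (forall z, B z -> C z -> False) -> exists D (h : nd D),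
    [/\ ssub D U, cross (cutset D) (cutset B) & cross (cutset D) (cutset C)].
Proof.
move=> ndU ndB ndC [BU _] [CU _] BC.
have [S [clS [b1 [Bb1 Sb1]] [b2 [Bb2 nSb2]]]] := nd_split ndB.
have [R [clR [c1 [Cc1 Rc1]] [c2 [Cc2 nRc2]]]] := nd_split ndC.
have [w nUw] := nd_ne (ndCo ndU).
case: (ndB) => clB _ _; case: (ndC) => clC _ _; case: (ndU) => clU _ [w1 [w2 [w12 nw1 nw2]]].
pose D := (B `&` S) `|` (C `&` R).
have clD : clopen D by apply: clopenU; exact: clopenI.
have ndD : nd D.
  split => //.
    exists b1, c1; split; [|by left|by right].
    by move=> e; apply: (BC b1) => //; rewrite e.
  by exists w1, w2; split => // -[[/BU ? _]|[/CU ? _]].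
exists D, ndD; split.
- split; first by move=> z [[/BU]|[/CU]].
  exists b2; split; first exact: BU.
  by move=> [[_ ?]|[Cb2 _]]; [|exact: BC Bb2 Cb2].
- apply/crossE; split.
  + by exists b1; split => //; left.
  + by exists c1; split; [right|move=> Bc1; exact: BC Bc1 Cc1].
  + by exists b2; split => //; move=> [[_ ?]|[Cb2 _]]; [|exact: BC Bb2 Cb2].
  + by exists w; split => //; [move=> [[/BU]|[/CU]]|move=> /BU].
- apply/crossE; split.
  + by exists c1; split; [right|].
  + by exists b1; split; [left|move=> Cb1; exact: BC Bb1 Cb1].
  + by exists c2; split => //; move=> [[Bc2 _]|[_ ?]]; [exact: BC Bc2 Cc2|].
  + by exists w; split => //; [move=> [[/BU]|[/CU]]|move=> /CU].
Qed.

Lemma crossC (A B : set (set T)) : cross A B -> cross B A.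
Proof. by move=> h X Y BX AY; rewrite setIC; exact: h. Qed.

Lemma same_side (U : set T) (b c : ncut T) : nd U -> in_ U b -> in_ U c ->
  exists d, [/\ in_ U d, ~ adj b d & ~ adj d c].
Proof.
move=> ndU hb hc; case: (hb) (hc) => [B [eB sB]] [C [eC sC]].
have ndB := piece_nd eB; have ndC := piece_nd eC.
case: (pselect (cross (proj1_sig b) (proj1_sig c))) => cr.
  by exists b; split => //; [case|exact: cross_nadj].
have [D [ndD [sD cDB cDC]]] : exists D (h : nd D),
    [/\ ssub D U, cross (cutset D) (cutset B) & cross (cutset D) (cutset C)].
  move: cr; rewrite eB eC => /not_cross [X [Y [hX hY XY]]].
  case: hX => eX; case: hY => eY; subst X Y.
  - exact: cross_disj XY.
  - apply: cross_nested => // z Bz; apply: contrapT => nCz; exact: XY Bz nCz.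
  - have CB : C `<=` B.
      move=> z Cz; apply: contrapT => nBz; exact: XY nBz Cz.
    have [D [ndD [sD c1 c2]]] := @cross_nested U C B ndU ndC ndB sC sB CB.
    by exists D, ndD.
  - exfalso; case: sB => BU _; case: sC => CU _.
    have [w nUw] := nd_ne (ndCo ndU).
    apply: (XY w) => [/BU|/CU]; exact: nUw.
exists (nc ndD); split; first exact: mk_in.
- by apply: cross_nadj; rewrite eB /=; exact: crossC.
- by apply: cross_nadj; rewrite eC /=.
Qed.

Lemma exists_in (U : set T) : nd U -> three U -> exists B (h : nd B), ssub B U.
Proof.
move=> ndU [a [b [c [ab ac bc [Ua Ub Uc]]]]].
have hs : forall x y, Stdlib.Lists.List.In x [:: a; b] ->
    Stdlib.Lists.List.In y [:: c] -> x <> y.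
  by move=> x y /= [<-|[<-|[]]] [<-|[]].
have [S [clS Sx Sy]] := sepLL zd hs.
case: (ndU) => clU _ [w1 [w2 [w12 nw1 nw2]]].
have ndB : nd (U `&` S).
  split; first exact: clopenI.
    by exists a, b; split => //; split => //; apply: Sx; simpl; auto.
  by exists w1, w2; split => // -[].
exists (U `&` S), ndB; split; first by move=> z [].
by exists c; split => // -[_]; apply: Sy; simpl; auto.
Qed.

Definition Srel (a b c : ncut T) := exists d, [/\ adj a d, ~ adj b d & ~ adj d c].

Lemma S_same (U : set T) (h : nd U) (b c : ncut T) : in_ U b -> in_ U c -> Srel (nc h) b c.
Proof.
move=> hb hc; have [d [hd h1 h2]] := same_side h hb hc.
by exists d; split => //; exact: in_adj.
Qed.

Lemma S_opp (U : set T) (h : nd U) (b c : ncut T) : in_ U b -> in_ (~` U) c -> ~ Srel (nc h) b c.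
Proof.
move=> hb hc [d [ad h1 h2]].
case: (link_in ad) => hd.
  by apply: h2; exact: opp_adj hd hc.
by apply: h1; exact: opp_adj hb hd.
Qed.

End Cutc.


Section Psi.
Variable T : topologicalType.
Variable zd : forall x y : T, x <> y -> exists C, [/\ clopen C, C x & ~ C y].
Variable pts : 'I_5 -> T.
Variable ipts : injective pts.
Variable phi : ncut T -> ncut T.
Variable hphi : isAut phi.


Lemma phi_bij : exists g, cancel phi g /\ cancel g phi.
Proof. by case: hphi => -[g h1 h2] _; exists g. Qed.

Lemma adjC (a b : ncut T) : adj a b -> adj b a.
Proof. by case=> ne nc'; split; [exact/nesym|move/crossC]. Qed.

Lemma Srel_sym (a b c : ncut T) : Srel a b c -> Srel a c b.
Proof. by case=> d [h1 h2 h3]; exists d; split => // /adjC. Qed.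

Lemma Srel_phi (a b c : ncut T) : Srel a b c <-> Srel (phi a) (phi b) (phi c).
Proof.
case: hphi => _ hadj; have [g [gK Kg]] := phi_bij.
split.
  case=> d [h1 h2 h3]; exists (phi d); split.
  - by apply/hadj.
  - by move/hadj.
  - by move/hadj.
case=> d [h1 h2 h3]; exists (g d); move: h1 h2 h3; rewrite -{1 2 3}(Kg d).
by move=> /hadj h1 h2 h3; split => // /hadj.
Qed.

Definition Side (U W : set T) := forall h : nd U,
  [/\ proj1_sig (phi (nc h)) = cutset W,
      forall b, in_ U b -> in_ W (phi b) &
      forall b, in_ (~` U) b -> in_ (~` W) (phi b)].

Lemma side_C (U W : set T) : nd U -> Side (~` U) W -> Side U (~` W).
Proof.
move=> hU S h; have [e h1 h2] := S (ndCo h).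
rewrite (ncC h (ndCo h)) in e; split.
- by rewrite e cutsetC.
- by move=> b hb; apply: h2; rewrite setCK.
- by move=> b hb; rewrite setCK; exact: h1.
Qed.

Lemma phi_nc (U : set T) (h : nd U) : exists W (hW : nd W), phi (nc h) = nc hW.
Proof.
have [W [hW e]] := ncutP (phi (nc h)).
by exists W, hW; apply: ncut_eq.
Qed.

Lemma phi_adj (a b : ncut T) : adj a b -> adj (phi a) (phi b).
Proof. by case: hphi => _ h /h. Qed.

Lemma side_ex3 (U : set T) : nd U -> three U -> exists W, nd W /\ Side U W.
Proof.
move=> hU t3.
have [B0 [hB0 sB0]] := exists_in zd hU t3.
have inb0 : in_ U (nc hB0) by exact: mk_in.
have [W0 [hW0 eW0]] := phi_nc hU.
have ad0 : adj (nc hW0) (phi (nc hB0)) by rewrite -eW0; apply: phi_adj; exact: in_adj.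
have key : forall W (hW : nd W), phi (nc hU) = nc hW -> in_ W (phi (nc hB0)) ->
    nd W /\ Side U W.
  move=> W hW eW inW; split => // h.
  have -> : nc h = nc hU by exact: ncut_eq.
  split; first by rewrite eW.
  - move=> b hb.
    have Sr : Srel (nc hW) (phi b) (phi (nc hB0)).
      rewrite -eW; apply: (proj1 (Srel_phi _ _ _)); exact (S_same zd hU hb inb0).
    have adb : adj (nc hW) (phi b) by rewrite -eW; apply: phi_adj; exact: in_adj.
    case: (link_in adb) => // hc.
    by exfalso; exact: (S_opp inW hc (Srel_sym Sr)).
  - move=> b hb.
    have adb : adj (nc hW) (phi b) by rewrite -eW; apply: phi_adj; exact: in_adjC.
    case: (link_in adb) => // hc.
    exfalso.
    have Sr : Srel (nc hW) (phi b) (phi (nc hB0)) by exact (S_same zd hW hc inW).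
    rewrite -eW -Srel_phi in Sr.
    exact (S_opp inb0 hb (Srel_sym Sr)).
case: (link_in ad0) => hin.
  by exists W0; apply: (key W0 hW0).
exists (~` W0); apply: (key _ (ndCo hW0)) => //.
by rewrite eW0; apply: ncut_eq; rewrite /= cutsetC.
Qed.

Lemma side_ex (U : set T) : nd U -> exists W, nd W /\ Side U W.
Proof.
move=> hU; case: (pigeon ipts U) => t3; first exact: side_ex3.
have [W [hW S]] := side_ex3 (ndCo hU) t3.
by exists (~` W); split; [exact: ndCo|exact: side_C].
Qed.

Lemma side_uniq (U W W' : set T) : nd U -> Side U W -> Side U W' -> W' = W.
Proof.
move=> hU S S'; have [e h1 h2] := S hU; have [e' h1' h2'] := S' hU.
have hW : nd W by exact: piece_nd e.
have [//|WW] := cutset_eq hW (etrans (esym e) e').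
exfalso; subst W'; rewrite setCK in h2'.
case: (pigeon ipts U) => t3.
  have [B0 [hB0 sB0]] := exists_in zd hU t3.
  have ib : in_ U (nc hB0) by exact: mk_in.
  exact: in_excl (h1 _ ib) (h1' _ ib).
have [B0 [hB0 sB0]] := exists_in zd (ndCo hU) t3.
have ib : in_ (~` U) (nc hB0) by exact: mk_in.
exact: in_excl (h2' _ ib) (h2 _ ib).
Qed.

Lemma psi_ex (U : set T) : exists W, nd U -> nd W /\ Side U W.
Proof.
case: (pselect (nd U)) => hU; last by exists U.
by have [W h] := side_ex hU; exists W.
Qed.

Definition psi (U : set T) : set T := proj1_sig (cid (psi_ex U)).

Lemma psiP (U : set T) : nd U -> nd (psi U) /\ Side U (psi U).
Proof. by rewrite /psi; case: cid => W h /h. Qed.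

Lemma psi_nd (U : set T) : nd U -> nd (psi U).
Proof. by move/psiP => []. Qed.

Lemma psi_cut (U : set T) (h : nd U) : proj1_sig (phi (nc h)) = cutset (psi U).
Proof. by have [_ S] := psiP h; case: (S h). Qed.

Lemma psiC (U : set T) : nd U -> psi (~` U) = ~` psi U.
Proof.
move=> hU; have [_ S] := psiP hU; have [_ S'] := psiP (ndCo hU).
apply: side_uniq (ndCo hU) _ S'.
by apply: side_C; [exact: ndCo|rewrite setCK].
Qed.

Lemma ssub_or (B U : set T) : B `<=` U -> ssub B U \/ B = U.
Proof.
move=> BU; case: (pselect (exists z, U z /\ ~ B z)) => h; first by left.
right; apply/seteqP; split => // z Uz; apply: contrapT => nBz; apply: h; by exists z.
Qed.

Lemma psi_mono (B U : set T) : nd B -> nd U -> B `<=` U -> psi B `<=` psi U.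
Proof.
move=> hB hU BU; case: (ssub_or BU) => [sBU|->//].
have [_ S] := psiP hU; have [_ h1 _] := S hU.
have [P [eP [PU _]]] := h1 _ (mk_in hB sBU).
have hpB := psi_nd hB.
have [eq1|eq1] := cutset_eq hpB (etrans (esym (psi_cut hB)) eP); first by rewrite -eq1.
subst P.
have [_ S'] := psiP (ndCo hB); have [_ h1' _] := S' (ndCo hB).
have sCU : ssub (~` U) (~` B).
  split; first by move=> z nUz Bz; exact: nUz (BU _ Bz).
  by case: sBU => _ [z [Uz nBz]]; exists z; split.
have [Q [eQ [QU [z [Qz nQz]]]]] := h1' _ (mk_in (ndCo hU) sCU).
rewrite (psiC hB) in QU Qz.
have : cutset (psi U) = cutset Q.
  by rewrite -(psi_cut hU) -eQ; congr (proj1_sig (phi _)); apply: ncut_eq; rewrite /= cutsetC.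
move=> /(cutset_eq (psi_nd hU)) [eQU|eQU]; subst Q.
- exfalso; apply: nQz; apply: PU; exact: Qz.
- by move=> x px; apply: contrapT => npx; exact: (QU x npx px).
Qed.

Lemma psi_inj (B U : set T) : nd B -> nd U -> psi B = psi U -> B = U.
Proof.
move=> hB hU e.
have [g [gK Kg]] := phi_bij.
have : phi (nc hB) = phi (nc hU) by apply: ncut_eq; rewrite !psi_cut e.
move=> /(can_inj gK) /(congr1 (@proj1_sig _ _)) /= /(cutset_eq hB) [//|eU].
exfalso; have := psiC hB; rewrite -eU -e => ee.
have [x px] := nd_ne (psi_nd hB).
by have := px; rewrite {1}ee => /(_ px).
Qed.

Lemma psi_refl (B U : set T) : nd B -> nd U -> psi B `<=` psi U -> B `<=` U.
Proof.
move=> hB hU sBU.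
case: (ssub_or sBU) => [ss|e]; last by rewrite (psi_inj hB hU e).
have hpU := psi_nd hU.
have ad : adj (nc hpU) (phi (nc hB)).
  by apply: in_adj; exists (psi B); split => //; exact: psi_cut.
have ad' : adj (nc hU) (nc hB).
  case: hphi => _ hadj; apply/hadj.
  suff -> : phi (nc hU) = nc hpU by [].
  by apply: ncut_eq; rewrite psi_cut.
have hpB := psi_nd hB.
case: (link_in ad') => -[P [eP [PU _]]]; move: eP => /= /(cutset_eq hB) [eP|eP]; subst P => //.
-
  exfalso; have := psi_mono (ndCo hB) hU PU; rewrite (psiC hB) => sCU.
  case: (hpU) => _ _ [w [_ [_ nw _]]]; apply: nw; case: (pselect (psi B w)) => pw.
  + exact: sBU.
  + exact: sCU.
- exfalso; have := psi_mono hB (ndCo hU) PU; rewrite (psiC hU) => sBC.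
  have [x px] := nd_ne hpB; exact: sBC x px (sBU x px).
- have UB : U `<=` B by move=> z Uz; apply: contrapT => nBz; exact: PU _ nBz Uz.
  have := psi_mono hU hB UB => sUB.
  case: ss => _ [z [pUz npBz]]; exfalso; exact: npBz (sUB z pUz).
Qed.

Lemma psi_surj (W : set T) : nd W -> exists U, nd U /\ psi U = W.
Proof.
move=> hW; have [g [gK Kg]] := phi_bij.
have [U [hU eU]] := ncutP (g (nc hW)).
have ea : g (nc hW) = nc hU by exact: ncut_eq.
have : cutset (psi U) = cutset W.
  by rewrite -(psi_cut hU) -ea Kg.
move=> /(cutset_eq (psi_nd hU)) [->|e]; first by exists U.
by exists (~` U); split; [exact: ndCo|rewrite psiC // e setCK].
Qed.

End Psi.


Section Points.
Variable T : topologicalType.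
Variable cT : compact [set: T].
Variable zd : forall x y : T, x <> y -> exists C, [/\ clopen C, C x & ~ C y].
Variable pts : 'I_5 -> T.
Variable ipts : injective pts.
Variable psi : set T -> set T.
Variable H1 : forall U, nd U -> nd (psi U).
Variable H2 : forall U, nd U -> psi (~` U) = ~` psi U.
Variable H3 : forall B U, nd B -> nd U -> (B `<=` U <-> psi B `<=` psi U).
Variable H4 : forall W, nd W -> exists U, nd U /\ psi U = W.

Definition two_pt (A : set T) := has_two_points A.

Lemma two_sub (A B : set T) : A `<=` B -> two_pt A -> two_pt B.
Proof. by move=> AB [x [y [xy Ax Ay]]]; exists x, y; split => //; apply: AB. Qed.

Lemma psi_inj6 (A B : set T) : nd A -> nd B -> psi A = psi B -> A = B.
Proof.
move=> hA hB e; apply/seteqP; split; apply/H3 => //; rewrite e //.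
Qed.

Lemma ndI (A B : set T) : nd A -> nd B -> two_pt (A `&` B) -> nd (A `&` B).
Proof.
move=> [clA _ cA] [clB _ _] t; split => //; first exact: clopenI.
by apply: two_sub cA => z nAz [].
Qed.

Lemma G1 (A B : set T) : nd A -> nd B ->
  ((A `&` B) !=set0 <-> (psi A `&` psi B) !=set0).
Proof.
move=> hA hB.
have e : A `<=` ~` B <-> psi A `<=` ~` psi B by rewrite -H2 //; apply: H3 => //; exact: ndCo.
split.
  move=> [x [Ax Bx]]; apply: contrapT => ne.
  have : psi A `<=` ~` psi B by move=> z pA pB; apply: ne; exists z.
  by move/e => /(_ x Ax).
move=> [x [Ax Bx]]; apply: contrapT => ne.
have : A `<=` ~` B by move=> z pA pB; apply: ne; exists z.
by move/e => /(_ x Ax).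
Qed.

Lemma G2 (A B : set T) : nd A -> nd B -> two_pt (psi A `&` psi B) ->
  two_pt (A `&` B) /\ psi (A `&` B) = psi A `&` psi B.
Proof.
move=> hA hB t.
have ndX : nd (psi A `&` psi B) by apply: ndI => //; exact: H1.
have [Y [hY eY]] := H4 ndX.
have YA : Y `<=` A by apply/H3 => //; rewrite eY => z [].
have YB : Y `<=` B by apply/H3 => //; rewrite eY => z [].
have YAB : Y `<=` A `&` B by move=> z Yz; split; [exact: YA|exact: YB].
have tAB : two_pt (A `&` B) by case: hY => _ ? _; exact: two_sub YAB _.
have hAB := ndI hA hB tAB.
split => //; apply/seteqP; split.
  move=> z pz; split.
    exact: (proj1 (H3 hAB hA) (@subIsetl _ A B) z pz).
  exact: (proj1 (H3 hAB hB) (@subIsetr _ A B) z pz).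
by rewrite -eY; exact: (proj1 (H3 hY hAB) YAB).
Qed.

Lemma G2' (A B : set T) : nd A -> nd B -> two_pt (A `&` B) ->
  psi (A `&` B) = psi A `&` psi B.
Proof.
move=> hA hB t; have hAB := ndI hA hB t.
suff t' : two_pt (psi A `&` psi B) by case: (G2 hA hB t').
case: (H1 hAB) => _ tt _; apply: two_sub tt => z pz; split.
  exact: (proj1 (H3 hAB hA) (@subIsetl _ A B) z pz).
exact: (proj1 (H3 hAB hB) (@subIsetr _ A B) z pz).
Qed.

Lemma G3 (A B : set T) : nd A -> nd B -> two_pt (~` A `&` ~` B) ->
  psi (A `|` B) = psi A `|` psi B.
Proof.
move=> hA hB t.
have hU : nd (A `|` B).
  case: hA hB => clA tA _ [clB _ _]; split.
  - exact: clopenU.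
  - by apply: two_sub tA => z; left.
  - by apply: two_sub t => z [? ?] [].
have e := G2' (ndCo hA) (ndCo hB) t.
rewrite (H2 hA) (H2 hB) -setCU (H2 hU) in e.
by rewrite -[LHS]setCK e setCI !setCK.
Qed.

Lemma one_pt (A : set T) (x : T) : A x -> ~ two_pt A -> forall z, A z -> z = x.
Proof.
move=> Ax nt z Az; apply: contrapT => zx; apply: nt; by exists z, x; split.
Qed.

Lemma C3 (P Q B : set T) (x : T) : nd P -> nd Q -> nd B -> P x -> Q x -> B x ->
  exists z, [/\ psi P z, psi Q z & psi B z].
Proof.
move=> hP hQ hB Px Qx Bx; apply: contrapT => ne.
have ne' : forall z, psi P z -> psi Q z -> psi B z -> False.
  by move=> z a b c; apply: ne; exists z.
have step : forall A1 A2 A3, nd A1 -> nd A2 -> nd A3 -> A1 x -> A2 x -> A3 x ->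
    (forall z, psi A1 z -> psi A2 z -> psi A3 z -> False) -> ~ two_pt (A1 `&` A2).
  move=> A1 A2 A3 h1 h2 h3 x1 x2 x3 nn t.
  have e := G2' h1 h2 t.
  have [z [z12 z3]] : (psi (A1 `&` A2) `&` psi A3) !=set0.
    by apply/(G1 (ndI h1 h2 t) h3); exists x.
  by move: z12; rewrite e => -[z1' z2']; exact: nn z z1' z2' z3.
have nPQ := step P Q B hP hQ hB Px Qx Bx ne'.
have nPB := step P B Q hP hB hQ Px Bx Qx (fun z (a : psi P z) (b : psi B z) (c : psi Q z) => ne' z a c b).
have nQB := step Q B P hQ hB hP Qx Bx Px (fun z (a : psi Q z) (b : psi B z) (c : psi P z) => ne' z c a b).
have [y1 [p1 q1]] : (psi P `&` psi Q) !=set0 by apply/(G1 hP hQ) => //; exists x.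
have [y2 [p2 b2]] : (psi P `&` psi B) !=set0 by apply/(G1 hP hB) => //; exists x.
have [y3 [q3 b3]] : (psi Q `&` psi B) !=set0 by apply/(G1 hQ hB) => //; exists x.
have s1 : forall z, psi P z -> psi Q z -> z = y1.
  move=> z a b; apply: (one_pt (A := psi P `&` psi Q)) => //.
  by move=> /(G2 hP hQ) [].
have s2 : forall z, psi P z -> psi B z -> z = y2.
  move=> z a b; apply: (one_pt (A := psi P `&` psi B)) => //.
  by move=> /(G2 hP hB) [].
have s3 : forall z, psi Q z -> psi B z -> z = y3.
  move=> z a b; apply: (one_pt (A := psi Q `&` psi B)) => //.
  by move=> /(G2 hQ hB) [].
have y12 : y1 <> y2 by move=> e; apply: (ne' y1) => //; rewrite e.
have y13 : y1 <> y3 by move=> e; apply: (ne' y1) => //; rewrite e.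
have y23 : y2 <> y3 by move=> e; apply: (ne' y2) => //; rewrite e.
pose M := (psi P `&` psi Q) `|` (psi P `&` psi B) `|` (psi Q `&` psi B).
have cl := fun A (h : nd A) => match H1 h with And3 c _ _ => c end.
have clM : clopen M.
  by apply: clopenU; [apply: clopenU|]; apply: clopenI; apply: cl.
have Msub : forall z, M z -> z = y1 \/ z = y2 \/ z = y3.
  by move=> z [[[a b]|[a b]]|[a b]]; [left; exact: s1|right; left; exact: s2|right; right; exact: s3].
have [p [q [pq py1 py2 py3 [qy1 qy2 qy3]]]] := avoid3 ipts y1 y2 y3.
have ndM : nd M.
  split => //.
    by exists y1, y2; split => //; [left; left|left; right].
  exists p, q; split => // => /Msub; tauto.
have [M' [hM' eM']] := H4 ndM.
have tB : two_pt (psi M' `&` psi B).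
  by exists y2, y3; split => //; rewrite eM'; split => //; [left; right|right].
have [tMB _] := G2 hM' hB tB.
have tP : two_pt (psi M' `&` psi P).
  by exists y1, y2; split => //; rewrite eM'; split => //; left; [left|right].
have tQ : two_pt (psi M' `&` psi Q).
  by exists y1, y3; split => //; rewrite eM'; split => //; [left; left|right].
have [tMP eMP] := G2 hM' hP tP.
have [tMQ eMQ] := G2 hM' hQ tQ.
have hMP := ndI hM' hP tMP; have hMQ := ndI hM' hQ tMQ.
have tC : two_pt (~` (M' `&` P) `&` ~` (M' `&` Q)).
  case: hM' => _ _; apply: two_sub => z nz; split => -[]; done.
have eU := G3 hMP hMQ tC.
have hUn : nd ((M' `&` P) `|` (M' `&` Q)).
  case: hMP hMQ => c1 t1 _ [c2 _ _]; split; [exact: clopenU|exact: two_sub t1 => z; left|].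
  by apply: two_sub tC => z [a b] [].
have eq' : (M' `&` P) `|` (M' `&` Q) = M'.
  apply: psi_inj6 => //; rewrite eU eMP eMQ eM'.
  apply/seteqP; split; first by move=> z [] [].
  by move=> z Mz; have := Mz; case=> [[[a b]|[a b]]|[a b]]; [left|left|right].
have M'PQ : forall z, M' z -> P z \/ Q z.
  by move=> z; rewrite -eq' => -[[]|[]]; auto.
case: tMB => a [b [ab [Ma Ba] [Mb Bb]]].
apply: ab.
have ex : forall z, M' z -> B z -> z = x.
  move=> z Mz Bz; case: (M'PQ z Mz) => h.
    by apply: (one_pt (A := P `&` B)) => //.
  by apply: (one_pt (A := Q `&` B)) => //.
by rewrite (ex a) // (ex b).
Qed.


Lemma pt_ex (x : T) : exists y, forall B, nd B -> (B x <-> psi B y).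
Proof.
have conv : forall y, (forall B, nd B -> B x -> psi B y) ->
    forall B, nd B -> (B x <-> psi B y).
  move=> y h B hB; split; first exact: h.
  move=> pBy; apply: contrapT => nBx.
  have := h _ (ndCo hB) nBx; rewrite H2 //; exact.
case: (pselect (exists P Q, [/\ nd P, nd Q, P x, Q x & forall z, P z -> Q z -> z = x])).
  move=> [P [Q [hP hQ Px Qx hPQ]]].
  have [y [py qy]] : (psi P `&` psi Q) !=set0 by apply/(G1 hP hQ); exists x.
  exists y; apply: conv => B hB Bx.
  have [z [pz qz bz]] := C3 hP hQ hB Px Qx Bx.
  have -> // : y = z.
  apply: (one_pt (A := psi P `&` psi Q)) => // t.
  have [[a [b [ab PQa PQb]]] _] := G2 hP hQ t; case: PQa => Pa Qa; case: PQb => Pb Qb.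
  by apply: ab; rewrite (hPQ a) // (hPQ b).
move=> niso.
have tw : forall B1 B2, nd B1 -> nd B2 -> B1 x -> B2 x -> two_pt (B1 `&` B2).
  move=> B1 B2 h1 h2 x1 x2; apply: contrapT => nt; apply: niso.
  exists B1, B2; split => // z z1 z2.
  by apply: (one_pt (A := B1 `&` B2)).
have [N1 [N2 [hN1 _ N1x _ _]]] := nd_nbhd cT zd ipts (@openT T) (I : setT x).
pose D := [set S | exists B, [/\ nd B, B x & S = psi B]].
have [y [_ yD]] : exists y, [set: T] y /\ forall S, D S -> S y.
  apply: (cpt_directed cT).
  - by move=> S [B [hB _ ->]]; case: (H1 hB) => -[].
  - move=> S1 S2 [B1 [h1 x1 ->]] [B2 [h2 x2 ->]].
    have t := tw _ _ h1 h2 x1 x2.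
    exists (psi (B1 `&` B2)); first by exists (B1 `&` B2); split => //; exact: ndI.
    by rewrite G2'.
  - by move=> S [B [hB _ ->]]; have [z pz] := nd_ne (H1 hB); exists z.
  - by exists (psi N1), N1.
exists y; apply: conv => B hB Bx; apply: yD; by exists B.
Qed.

Definition fpt (x : T) : T := proj1_sig (cid (pt_ex x)).

Lemma fptP (x : T) (B : set T) : nd B -> (B x <-> psi B (fpt x)).
Proof. by rewrite /fpt; case: cid => y /= h; exact: h. Qed.

Lemma fpt_cont : continuous fpt.
Proof.
move=> x W; rewrite /= nbhsE /= => -[W' [oW' W'x] W'W].
have [N1 [N2 [h1 h2 x1 x2 sN]]] := nd_nbhd cT zd ipts oW' W'x.
have [B1 [hB1 e1]] := H4 h1; have [B2 [hB2 e2]] := H4 h2.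
rewrite ?nbhsE /=; exists (B1 `&` B2).
  split.
    by apply: openI; [case: hB1 => -[]|case: hB2 => -[]].
  by split; [apply/(fptP _ hB1); rewrite e1|apply/(fptP _ hB2); rewrite e2].
move=> z [z1 z2]; apply: W'W; apply: sN; split.
  by rewrite -e1; apply/(fptP _ hB1).
by rewrite -e2; apply/(fptP _ hB2).
Qed.

End Points.


Section Homeo.
Variable T : topologicalType.

Lemma imageC (f g : T -> T) (A : set T) : cancel f g -> cancel g f ->
  f @` (~` A) = ~` (f @` A).
Proof.
move=> fK gK; apply/seteqP; split.
  by move=> _ [x nAx <-] [y Ay /(can_inj fK) e]; apply: nAx; rewrite -e.
move=> y nfy; exists (g y); last by rewrite gK.
by move=> Agy; apply: nfy; exists (g y).
Qed.

Lemma image_pre (f g : T -> T) (A : set T) : cancel f g -> cancel g f ->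
  f @` A = g @^-1` A.
Proof.
move=> fK gK; apply/seteqP; split.
  by move=> _ [x Ax <-]; rewrite /preimage /= fK.
by move=> y Agy; exists (g y).
Qed.

Lemma homeo_clopen (f : T -> T) (A : set T) : homeo f -> clopen A -> clopen (f @` A).
Proof.
move=> [g [fK gK cf cg]] [oA cA]; rewrite (image_pre _ fK gK); split.
  by apply: (@open_comp _ _ g) => // x _; exact: cg.
by apply: (@closed_comp _ _ g) => // x _; exact: cg.
Qed.

Lemma homeo_open (f : T -> T) (A : set T) : homeo f -> open A -> open (f @` A).
Proof.
move=> [g [fK gK cf cg]] oA; rewrite (image_pre _ fK gK).
by apply: (@open_comp _ _ g) => // x _; exact: cg.
Qed.

Lemma two_image (f : T -> T) (g : T -> T) (A : set T) : cancel f g ->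
  has_two_points A -> has_two_points (f @` A).
Proof.
move=> fK [x [y [xy Ax Ay]]]; exists (f x), (f y); split.
- by move/(can_inj fK).
- by exists x.
- by exists y.
Qed.

Lemma homeo_nd (f : T -> T) (A : set T) : homeo f -> nd A -> nd (f @` A).
Proof.
move=> hf [clA tA tC]; have [g [fK gK _ _]] := hf.
split; first exact: homeo_clopen.
  exact: two_image fK tA.
by rewrite -(imageC _ fK gK); exact: two_image fK tC.
Qed.

Lemma cut_image_cutset (f g : T -> T) (U : set T) : cancel f g -> cancel g f ->
  cut_image f (cutset U) = cutset (f @` U).
Proof.
move=> fK gK; rewrite /cut_image /cutset image_setU !image_set1.
by rewrite (imageC _ fK gK).
Qed.

Lemma Phi_proj (f : T -> T) (a : ncut T) : is_ncut (cut_image f (proj1_sig a)) ->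
  proj1_sig (Phi f a) = cut_image f (proj1_sig a).
Proof. by rewrite /Phi; case: pselect. Qed.

Lemma homeo_ncut (f : T -> T) (a : ncut T) : homeo f ->
  is_ncut (cut_image f (proj1_sig a)).
Proof.
move=> hf; have [g [fK gK _ _]] := hf.
have [U [hU ->]] := ncutP a.
rewrite (cut_image_cutset _ fK gK); apply: nd_ncut; exact: homeo_nd.
Qed.

Lemma Phi_nd (f : T -> T) (U : set T) (h : nd U) : homeo f ->
  proj1_sig (Phi f (nc h)) = cutset (f @` U).
Proof.
move=> hf; have [g [fK gK _ _]] := hf.
by rewrite Phi_proj; [rewrite /= (cut_image_cutset _ fK gK)|exact: homeo_ncut].
Qed.

Lemma homeo_inv (f g : T -> T) : homeo f -> cancel f g -> cancel g f -> homeo g.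
Proof.
move=> [g' [fK' gK' cf cg']] fK gK.
have e : g = g'.
  by apply/funext => x; rewrite -[x in LHS]gK' fK.
by exists f; split => //; rewrite e.
Qed.

Lemma homeo_comp (f g : T -> T) : homeo f -> homeo g -> homeo (f \o g).
Proof.
move=> [f' [fK fK' cf cf']] [g' [gK gK' cg cg']].
exists (g' \o f'); split.
- by move=> x /=; rewrite fK gK.
- by move=> x /=; rewrite gK' fK'.
- by move=> x; apply: continuous_comp; [exact: cg|exact: cf].
- by move=> x; apply: continuous_comp; [exact: cf'|exact: cg'].
Qed.

Lemma image_comp' (f g : T -> T) (A : set T) : (f \o g) @` A = f @` (g @` A).
Proof. by rewrite image_comp. Qed.

Lemma Phi_hom (f g : T -> T) : homeo f -> homeo g -> Phi (f \o g) = Phi f \o Phi g.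
Proof.
move=> hf hg; apply/funext => a /=; apply: ncut_eq.
have hfg := homeo_comp hf hg.
rewrite Phi_proj; last exact: homeo_ncut.
rewrite Phi_proj; last exact: homeo_ncut.
rewrite Phi_proj; last exact: homeo_ncut.
rewrite /cut_image; apply/seteqP; split.
  by move=> _ [A CA <-]; exists (g @` A); [exists A|rewrite image_comp'].
by move=> _ [_ [A CA <-] <-]; exists A => //; rewrite image_comp'.
Qed.

Lemma crossE_img (f g : T -> T) (U V : set T) : cancel f g -> cancel g f ->
  cross (cutset (f @` U)) (cutset (f @` V)) <-> cross (cutset U) (cutset V).
Proof.
move=> fK gK.
have key : forall A B : set T, (f @` A `&` f @` B) !=set0 <-> (A `&` B) !=set0.
  move=> A B; split.
    move=> [_ [[x Ax <-] [y By /(can_inj fK) e]]]; exists x; split => //; by rewrite -e.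
  by move=> [x [Ax Bx]]; exists (f x); split; [exists x|exists x].
rewrite !crossE -!(imageC _ fK gK).
split => -[h1 h2 h3 h4]; split;
  first [exact: (proj1 (key _ _) h1)| exact: (proj1 (key _ _) h2)
        | exact: (proj1 (key _ _) h3)| exact: (proj1 (key _ _) h4)
        | exact: (proj2 (key _ _) h1)| exact: (proj2 (key _ _) h2)
        | exact: (proj2 (key _ _) h3)| exact: (proj2 (key _ _) h4)].
Qed.

Lemma Phi_aut (f : T -> T) : homeo f -> isAut (Phi f).
Proof.
move=> hf; have [g [fK gK _ _]] := hf.
have hg := homeo_inv hf fK gK.
have PK : forall (f g : T -> T), homeo f -> homeo g -> cancel f g -> cancel (Phi f) (Phi g).
  move=> f1 g1 hf1 hg1 fK1 a; apply: ncut_eq.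
  have [U [hU eU]] := ncutP a.
  have -> : a = nc hU by exact: ncut_eq.
  have [g1' [_ gK1 _ _]] := hg1.
  have gK1' : cancel g1 f1.
    move=> x; have [f1' [fK1' f1K' _ _]] := hf1.
    by rewrite -[x in RHS](f1K' x); congr f1; rewrite -[in RHS](fK1 (f1' x)) f1K'.
  have hfU := homeo_nd hf1 hU.
  have e1 : Phi f1 (nc hU) = nc hfU by apply: ncut_eq; rewrite Phi_nd.
  rewrite e1 Phi_nd //=; congr cutset.
  apply/seteqP; split; first by move=> _ [_ [x Ux <-] <-]; rewrite fK1.
  by move=> x Ux; exists (f1 x); [exists x|rewrite fK1].
split; first by exists (Phi g); apply: PK.
move=> a b.
have [U [hU eU]] := ncutP a; have [V [hV eV]] := ncutP b.
have -> : a = nc hU by exact: ncut_eq.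
have -> : b = nc hV by exact: ncut_eq.
have hfU := homeo_nd hf hU; have hfV := homeo_nd hf hV.
have e1 : Phi f (nc hU) = nc hfU by apply: ncut_eq; rewrite Phi_nd.
have e2 : Phi f (nc hV) = nc hfV by apply: ncut_eq; rewrite Phi_nd.
rewrite e1 e2 /adj /= /compatible (crossE_img _ _ fK gK).
split; case=> ne nc'; split => // e; apply: ne.
  by rewrite -e1 -e2 e.
have : Phi g (nc hfU) = Phi g (nc hfV) by rewrite e.
by rewrite -e1 -e2 !(PK f g).
Qed.

End Homeo.


Section Inv.
Variable T : topologicalType.
Variable psi : set T -> set T.
Variable H1 : forall U, nd U -> nd (psi U).
Variable H2 : forall U, nd U -> psi (~` U) = ~` psi U.
Variable H3 : forall B U, nd B -> nd U -> (B `<=` U <-> psi B `<=` psi U).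
Variable H4 : forall W, nd W -> exists U, nd U /\ psi U = W.

Lemma chi_ex (W : set T) : exists U, nd W -> nd U /\ psi U = W.
Proof.
case: (pselect (nd W)) => hW; last by exists W.
by have [U h] := H4 hW; exists U.
Qed.

Definition chi (W : set T) : set T := proj1_sig (cid (chi_ex W)).

Lemma chiP (W : set T) : nd W -> nd (chi W) /\ psi (chi W) = W.
Proof. by rewrite /chi; case: cid => U h /h. Qed.

Lemma chi_psi (U : set T) : nd U -> chi (psi U) = U.
Proof.
move=> hU; have [h e] := chiP (H1 hU).
by apply: (psi_inj6 H3) => //.
Qed.

Lemma K1 (W : set T) : nd W -> nd (chi W).
Proof. by move/chiP => []. Qed.

Lemma K2 (W : set T) : nd W -> chi (~` W) = ~` chi W.
Proof.
move=> hW; have [h e] := chiP hW; have [h' e'] := chiP (ndCo hW).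
apply: (psi_inj6 H3) => //; first exact: ndCo.
by rewrite e' H2 // e.
Qed.

Lemma K3 (B U : set T) : nd B -> nd U -> (B `<=` U <-> chi B `<=` chi U).
Proof.
move=> hB hU; have [hb eb] := chiP hB; have [hu eu] := chiP hU.
by rewrite (H3 hb hu) eb eu.
Qed.

Lemma K4 (W : set T) : nd W -> exists U, nd U /\ chi U = W.
Proof. by move=> hW; exists (psi W); split; [exact: H1|exact: chi_psi]. Qed.

End Inv.

Section MainX.
End MainX.
Section Main.
Variable T : topologicalType.
Variable cT : compact [set: T].
Variable zd : forall x y : T, x <> y -> exists C, [/\ clopen C, C x & ~ C y].
Variable pts : 'I_5 -> T.
Variable ipts : injective pts.

Lemma Phi_inj (f g : T -> T) : homeo f -> homeo g -> Phi f = Phi g -> f = g.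
Proof.
move=> hf hg e.
have [f' [fK fK' _ _]] := hf; have [g' [gK gK' _ _]] := hg.
have cs : forall U, nd U -> f @` U = g @` U \/ f @` U = ~` (g @` U).
  move=> U hU; have := Phi_nd hU hf; rewrite e Phi_nd // => ee.
  by have [->|->] := cutset_eq (homeo_nd hg hU) ee; [left|right].
pose k := g' \o f.
have gg : forall A, g' @` (g @` A) = A.
  move=> A; apply/seteqP; split; first by move=> _ [_ [x Ax <-] <-]; rewrite gK.
  by move=> x Ax; exists (g x); [exists x|rewrite gK].
have ks : forall U, nd U -> k @` U = U \/ k @` U = ~` U.
  move=> U hU; rewrite /k image_comp'.
  by case: (cs U hU) => ->; [left|right]; rewrite ?(imageC _ gK' gK) ?gg.
apply/funext => x; apply: contrapT => fgx.
have kx : k x <> x by move=> e'; apply: fgx; have := congr1 g e'; rewrite /k /= gK'.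
set z := k x in kx.
have [p [q [pq px pz _ [qx qz _]]]] := avoid3 ipts x z z.
have [r1 [r2 [r12 r1x r1p r1q [r2x r2p r2q]]]] := avoid3 ipts x p q.
have [r [rx rp rq rz]] : exists r, [/\ r <> x, r <> p, r <> q & r <> z].
  case: (pselect (r1 = z)) => e1; last by exists r1.
  by exists r2; split => // e2; apply: r12; rewrite e1 e2.
have h1 : forall a b, Stdlib.Lists.List.In a [:: x; p] ->
    Stdlib.Lists.List.In b [:: z; q; r] -> a <> b.
  move=> a b /= [<-|[<-|[]]] [<-|[<-|[<-|[]]]] //; by apply/nesym.
have [A1 [clA1 A1i A1o]] := sepLL zd h1.
have h2 : forall a b, Stdlib.Lists.List.In a [:: q] ->
    Stdlib.Lists.List.In b [:: x; z; r] -> a <> b.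
  move=> a b /= [<-|[]] [<-|[<-|[<-|[]]]] //; by apply/nesym.
have [B [clB Bi Bo]] := sepLL zd h2.
have In1 := fun a => @List.in_eq _ a [::].
have hA1 : nd A1.
  split => //; first by exists x, p; split => //; [exact/nesym|apply: A1i; simpl; auto..].
  by exists z, q; split; [exact/nesym|apply: A1o; simpl; auto..].
pose A2 := A1 `|` (B `&` ~` A1).
have hA2 : nd A2.
  split; first by apply: clopenU => //; exact: clopenD.
    exists x, q; split; [exact/nesym|left; apply: A1i; simpl; auto|].
    by right; split; [apply: Bi; simpl; auto|apply: A1o; simpl; auto].
  exists z, r; split; first exact/nesym.
    by move=> [h|[h _]]; [apply: (A1o z) h; simpl; auto|apply: (Bo z) h; simpl; auto].
  by move=> [h|[h _]]; [apply: (A1o r) h; simpl; auto|apply: (Bo r) h; simpl; auto].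
have kA : forall A, nd A -> A x -> ~ A z -> k @` A = ~` A.
  move=> A hA Ax nAz; case: (ks A hA) => // e'.
  by exfalso; apply: nAz; rewrite -e'; exists x.
have e1 := kA A1 hA1 (A1i x (or_introl erefl)) (A1o z (or_introl erefl)).
have e2 := kA A2 hA2 (or_introl (A1i x (or_introl erefl))).
have nA2z : ~ A2 z.
  by move=> [h|[h _]]; [apply: (A1o z) h; simpl; auto|apply: (Bo z) h; simpl; auto].
have {}e2 := e2 nA2z.
have sub : k @` A1 `<=` k @` A2 by move=> _ [y Ay <-]; exists y => //; left.
rewrite e1 e2 in sub.
have nq : ~ A1 q by apply: A1o; simpl; auto.
apply: (sub q nq); right; split => //; apply: Bi; simpl; auto.
Qed.


Lemma Phi_surj (phi : ncut T -> ncut T) : isAut phi -> exists f, homeo f /\ Phi f = phi.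
Proof.
move=> hphi.
pose ps := psi zd ipts hphi.
have H1 : forall U, nd U -> nd (ps U) by move=> U; exact: psi_nd.
have H2 : forall U, nd U -> ps (~` U) = ~` ps U by move=> U; exact: psiC.
have H3 : forall B U, nd B -> nd U -> (B `<=` U <-> ps B `<=` ps U).
  by move=> B U hB hU; split; [exact: psi_mono|exact: psi_refl].
have H4 : forall W, nd W -> exists U, nd U /\ ps U = W by move=> W; exact: psi_surj.
pose f := fpt cT zd ipts H1 H2 H3 H4.
pose g := fpt cT zd ipts (K1 H4) (K2 H2 H3 H4) (K3 H3 H4) (K4 H1 H3 H4).
have fP : forall x B, nd B -> (B x <-> ps B (f x)) by move=> x B; exact: fptP.
have gP : forall y W, nd W -> (W y <-> chi H4 W (g y)) by move=> y W; exact: fptP.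
have gf : cancel f g.
  move=> x; apply: contrapT => ne.
  have [B [hB Bx nB]] := nd_sep zd ipts (nesym ne).
  apply: nB; rewrite -(chi_psi H1 H3 H4 hB); apply/(gP _ _ (H1 _ hB)); exact/(fP x B hB).
have fg : cancel g f.
  move=> y; apply: contrapT => ne.
  have [B [hB By nB]] := nd_sep zd ipts (nesym ne).
  have [hc ec] := chiP H4 hB.
  apply: nB; rewrite -ec; apply/(fP _ _ hc); exact/(gP y B hB).
have hf : homeo f.
  exists g; split => //.
    exact: fpt_cont.
  exact: fpt_cont.
exists f; split => //.
apply/funext => a; apply: ncut_eq.
have [U [hU eU]] := ncutP a.
have -> : a = nc hU by exact: ncut_eq.
rewrite Phi_nd // (psi_cut zd ipts hphi hU); congr cutset.
apply/seteqP; split; first by move=> _ [x Ux <-]; exact/(fP x U hU).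
move=> y py; exists (g y); last exact: fg.
by apply/(fP _ _ hU); rewrite fg.
Qed.

End Main.


Section Topo2.
Variable T : topologicalType.
Variable cT : compact [set: T].
Variable zd : forall x y : T, x <> y -> exists C, [/\ clopen C, C x & ~ C y].
Variable pts : 'I_5 -> T.
Variable ipts : injective pts.

Definition agree (F : set (ncut T)) (f1 f2 : T -> T) := forall a, F a -> Phi f1 a = Phi f2 a.

Lemma orient (f1 f2 : T -> T) (N : set T) (h : nd N) : homeo f1 -> homeo f2 ->
  Phi f1 (nc h) = Phi f2 (nc h) -> f1 @` N = f2 @` N \/ f1 @` N = ~` (f2 @` N).
Proof.
move=> h1 h2 e; have := Phi_nd h h1; rewrite e Phi_nd // => ee.
by have [->|->] := cutset_eq (homeo_nd h2 h) ee; [left|right].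
Qed.

Lemma img_sub (f g : T -> T) (A B : set T) : cancel f g -> f @` A `<=` f @` B -> A `<=` B.
Proof.
move=> fK s x Ax; have [y By e] := s (f x) (ex_intro2 _ _ x Ax erefl).
by rewrite -(can_inj fK e).
Qed.

Lemma fixN (N : set T) : nd N -> exists F : set (ncut T), finite_set F /\
  forall f1 f2, homeo f1 -> homeo f2 -> agree F f1 f2 -> f1 @` N = f2 @` N.
Proof.
have gen : forall N M (hN : nd N) (hM : nd M), ssub M N ->
    forall f1 f2, homeo f1 -> homeo f2 -> agree [set nc hN; nc hM] f1 f2 ->
    f1 @` N = f2 @` N.
  move=> N' M hN hM [MN [z [Nz nMz]]] f1 f2 h1 h2 ag.
  have [f1' [f1K f1K' _ _]] := h1; have [f2' [f2K f2K' _ _]] := h2.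
  have eN := orient h1 h2 (ag _ (or_introl erefl)).
  have eM := orient h1 h2 (ag _ (or_intror erefl)).
  case: eN => // eN; exfalso.
  have sM : f1 @` M `<=` f1 @` N' by move=> _ [y My <-]; exists y => //; exact: MN.
  case: eM => eM.
    rewrite eN eM -(imageC _ f2K f2K') in sM; have := img_sub f2K sM.
    move=> MnN; have [x Mx] := nd_ne hM; exact: MnN x Mx (MN x Mx).
  rewrite eN eM -!(imageC _ f2K f2K') in sM; have := img_sub f2K sM.
  move=> CM; apply: nMz; apply: contrapT => nM; exact: CM z nM Nz.
move=> hN; case: (pigeon ipts N) => t3.
  have [M [hM sM]] := exists_in zd hN t3.
  by exists [set nc hN; nc hM]; split; [exact: finite_set2|exact: gen].
have [M [hM sM]] := exists_in zd (ndCo hN) t3.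
exists [set nc (ndCo hN); nc hM]; split; first exact: finite_set2.
move=> f1 f2 h1 h2 ag.
have [f1' [f1K f1K' _ _]] := h1; have [f2' [f2K f2K' _ _]] := h2.
have := gen _ _ (ndCo hN) hM sM f1 f2 h1 h2 ag.
rewrite (imageC _ f1K f1K') (imageC _ f2K f2K') => e.
by rewrite -[LHS]setCK e setCK.
Qed.

Lemma image_setI' (f g : T -> T) (A B : set T) : cancel f g ->
  f @` (A `&` B) = f @` A `&` f @` B.
Proof.
move=> fK; apply/seteqP; split; first by move=> _ [x [Ax Bx] <-]; split; exists x.
move=> _ [[x Ax <-] [y By e]]; exists x => //; split => //.
by rewrite -(can_inj fK e).
Qed.

Lemma agreeU (F G : set (ncut T)) f1 f2 : agree (F `|` G) f1 f2 -> agree F f1 f2 /\ agree G f1 f2.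
Proof. by move=> h; split => a Fa; apply: h; [left|right]. Qed.

Lemma fixD (D : set T) : clopen D -> exists F : set (ncut T), finite_set F /\
  forall f1 f2, homeo f1 -> homeo f2 -> agree F f1 f2 -> f1 @` D = f2 @` D.
Proof.
have fixI : forall N1 N2, nd N1 -> nd N2 -> exists F : set (ncut T), finite_set F /\
    forall f1 f2, homeo f1 -> homeo f2 -> agree F f1 f2 -> f1 @` (N1 `&` N2) = f2 @` (N1 `&` N2).
  move=> N1 N2 h1 h2; have [F1 [fin1 P1]] := fixN h1; have [F2 [fin2 P2]] := fixN h2.
  exists (F1 `|` F2); split; first by rewrite finite_setU.
  move=> f1 f2 hf1 hf2 /agreeU [a1 a2].
  have [g1 [K1 _ _ _]] := hf1; have [g2 [K2 _ _ _]] := hf2.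
  by rewrite (image_setI' _ _ K1) (image_setI' _ _ K2) (P1 _ _ hf1 hf2 a1) (P2 _ _ hf1 hf2 a2).
have small : forall E, clopen E -> ~ has_two_points E -> exists F : set (ncut T), finite_set F /\
    forall f1 f2, homeo f1 -> homeo f2 -> agree F f1 f2 -> f1 @` E = f2 @` E.
  move=> D' [oD cD] nt; case: (pselect (D' !=set0)) => [[x Dx]|D0].
    have [N1 [N2 [h1 h2 x1 x2 sN]]] := nd_nbhd cT zd ipts oD Dx.
    have e : N1 `&` N2 = D'.
      apply/seteqP; split => // z Dz.
      have -> : z = x by apply: contrapT => zx; apply: nt; exists z, x.
      by split.
    by rewrite -e; exact: fixI.
  have -> : D' = set0 by apply/seteqP; split => // z Dz; apply: D0; exists z.
  by exists set0; split; [exact: finite_set0|move=> f1 f2 *; rewrite !image_set0].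
move=> clD.
case: (pselect (has_two_points D)) => tD; case: (pselect (has_two_points (~` D))) => tC.
- have hD : nd D by [].
  have [F [fin P]] := fixN hD; by exists F.
- have [F [fin P]] := small _ (clopenC clD) tC.
  exists F; split => // f1 f2 h1 h2 ag.
  have [g1 [K1 K1' _ _]] := h1; have [g2 [K2 K2' _ _]] := h2.
  have := P _ _ h1 h2 ag; rewrite (imageC _ K1 K1') (imageC _ K2 K2') => e.
  by rewrite -[LHS]setCK e setCK.
- exact: small.
- exact: small.
Qed.

End Topo2.


Section Final.
Variable T : topologicalType.
Variable cT : compact [set: T].
Variable zd : forall x y : T, x <> y -> exists C, [/\ clopen C, C x & ~ C y].
Variable pts : 'I_5 -> T.
Variable ipts : injective pts.

Lemma Phi_cont (S : set (ncut T -> ncut T)) : perm_open S -> co_open [set f | S (Phi f)].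
Proof.
move=> pS f hf Sf.
have [F [finF PF]] := pS _ (Phi_aut hf) Sf.
pose r (a : ncut T) := proj1_sig (cid (ncutP a)).
have rP : forall a, nd (r a) /\ proj1_sig a = cutset (r a).
  by move=> a; rewrite /r; case: cid.
pose P := (fun a => (r a, f @` r a)) @` F `|` (fun a => (~` r a, f @` ~` r a)) @` F.
exists P; split.
- by rewrite finite_setU; split; exact: finite_image.
- have ok : forall A, clopen A -> compact A /\ open (f @` A) /\ f @` A `<=` f @` A.
    move=> A [oA cA]; split; first exact: (subclosed_compact cA cT).
    by split => //; exact: homeo_open.
  move=> p [[a Fa <-]|[a Fa <-]] /=; apply: ok.
    by case: (rP a) => -[].
  by case: (rP a) => -[? _ _] _; exact: clopenC.
move=> h hh Ph; apply: (PF _ (Phi_aut hh)) => a Fa.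
have [ha ea] := rP a.
have -> : a = nc ha by exact: ncut_eq.
apply: ncut_eq; rewrite !Phi_nd //; congr cutset.
have [h' [hK hK' _ _]] := hh; have [f' [fK fK' _ _]] := hf.
have s1 : h @` r a `<=` f @` r a by apply: (Ph (r a, f @` r a)); left; exists a.
have s2 : h @` (~` r a) `<=` f @` (~` r a) by apply: (Ph (~` r a, f @` ~` r a)); right; exists a.
rewrite (imageC _ hK hK') (imageC _ fK fK') in s2.
apply/seteqP; split => // y fy; apply: contrapT => ny; exact: s2 y ny fy.
Qed.

Lemma per_p (f0 : T -> T) (K W : set T) : homeo f0 -> compact K -> open W ->
  f0 @` K `<=` W -> exists F : set (ncut T), finite_set F /\
  forall f1, homeo f1 -> agree F f1 f0 -> f1 @` K `<=` W.
Proof.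
move=> hf0 cK oW sKW.
have [f0' [K0 K0' cf0 _]] := hf0.
have cfK : compact (f0 @` K).
  apply: continuous_compact => //; apply: continuous_in_subspaceT => x _; exact: cf0.
have [C [clC sKC sCW]] := clopen_between cT zd cfK oW sKW.
have hf0' := homeo_inv hf0 K0 K0'.
have clD := homeo_clopen hf0' clC.
have [F [finF PF]] := fixD cT zd ipts clD.
exists F; split => // f1 hf1 ag.
have e := PF _ _ hf1 hf0 ag.
have eC : f0 @` (f0' @` C) = C.
  apply/seteqP; split; first by move=> _ [_ [y Cy <-] <-]; rewrite K0'.
  by move=> y Cy; exists (f0' y); [exists y|rewrite K0'].
move=> _ [x Kx <-]; apply: sCW; rewrite -eC -e; exists x => //.
by exists (f0 x); [apply: sKC; exists x|rewrite K0].
Qed.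

Lemma Phi_open (S : set (T -> T)) : co_open S ->
  perm_open [set phi | exists f, homeo f /\ S f /\ Phi f = phi].
Proof.
move=> cS g Ag [f0 [hf0 [Sf0 eg]]].
have [P [finP Pc PS]] := cS f0 hf0 Sf0.
have exF : forall p, exists F : set (ncut T), P p -> finite_set F /\
    forall f1, homeo f1 -> agree F f1 f0 -> f1 @` p.1 `<=` p.2.
  move=> p; case: (pselect (P p)) => Pp; last by exists set0.
  have [cK [oW sKW]] := Pc p Pp.
  by have [F h] := per_p hf0 cK oW sKW; exists F.
pose Fp p := proj1_sig (cid (exF p)).
have FpP : forall p, P p -> finite_set (Fp p) /\
    forall f1, homeo f1 -> agree (Fp p) f1 f0 -> f1 @` p.1 `<=` p.2.
  by move=> p; rewrite /Fp; case: cid.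
exists (\bigcup_(p in P) Fp p); split.
  by apply: bigcup_finite => // p Pp; case: (FpP p Pp).
move=> h Ah hg.
have [f' [hf' ef']] := Phi_surj cT zd ipts Ah.
exists f'; split => //; split => //.
apply: PS => // p Pp; apply: (proj2 (FpP p Pp)) => // a Fa.
by rewrite ef' eg; apply: hg; exists p.
Qed.

End Final.

Theorem mainTheorem1 (T : topologicalType) :
  stone_space T ->
  @second_countable T ->
  (exists x : 'I_5 -> T, injective x) ->
  (    (* Phi is well defined: f(U) ⊔ f(V) is a non-peripheral cut *)
    (forall f : T -> T, homeo f -> forall a : ncut T,
        is_ncut (cut_image f (proj1_sig a))) /\
    (* Phi lands in Aut(C(E)) *)
    (forall f : T -> T, homeo f -> isAut (Phi f)) /\
    (* Phi is a group homomorphism *)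
    (forall f g : T -> T, homeo f -> homeo g -> Phi (f \o g) = Phi f \o Phi g) /\
    (* Phi is injective on Homeo(E) *)
    (forall f g : T -> T, homeo f -> homeo g -> Phi f = Phi g -> f = g) /\
    (* Phi is onto Aut(C(E)) *)
    (forall phi : ncut T -> ncut T, isAut phi -> exists f, homeo f /\ Phi f = phi) /\
    (* Phi is continuous *)
    (forall S : set (ncut T -> ncut T), perm_open S -> co_open [set f | S (Phi f)]) /\
    (* Phi is open *)
    (forall S : set (T -> T), co_open S ->
        perm_open [set phi | exists f, homeo f /\ S f /\ Phi f = phi])).
Proof.
move=> [cT hT tdT] _ [pts ipts].
have zd := zero_dim hT cT tdT.
split; [|split; [|split; [|split; [|split; [|split]]]]].
- move=> f hf a; exact: homeo_ncut.
- move=> f hf; exact: Phi_aut.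
- move=> f g hf hg; exact: Phi_hom.
- move=> f g hf hg; exact: (Phi_inj zd ipts).
- move=> phi hphi; exact: (Phi_surj cT zd ipts hphi).
- exact: Phi_cont.
- exact: (Phi_open cT zd ipts).
Qed.
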